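(* Let $G$ be a connected simple graph on $n\geq 3$ vertices. Then $$\mathrm{v}(G)\leq \min\left\{\gamma_{e}(G),\left\lfloor\frac{n-1}{2}\right\rfloor\right\}.$$ Hence $\mathrm{v}(G)\leq \min\{m(G),\lfloor\frac{n-1}{2}\rfloor\}$.
   Context: For a simple graph $G$, $\mathrm{v}(G)$ denotes the v-number of the edge ideal $I(G)$; combinatorially, $\mathrm{v}(G)=\min\{|A| : A\subseteq V(G) \text{ is an independent set and } N_G(A) \text{ is a vertex cover of } G\}$, where $N_G(A)$ is the set of vertices adjacent to some vertex of $A$. (Equivalently, $\mathrm{v}(I)=\min\{\deg f : f \text{ homogeneous}, (I:f) \text{ prime}\}$.) A matching is a set of pairwise disjoint edges; $m(G)$ is the maximum size of a matching, and the edge domination number $\gamma_e(G)$ is the minimum size of a maximal (with respect to inclusion) matching of $G$. *)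

(* Defs.v *)
From mathcomp Require Import all_boot.
Set Implicit Arguments. Unset Strict Implicit. Unset Printing Implicit Defensive.

Section Graphs.
Variable T : finType.
Variable e : rel T.

Definition simple_graph : Prop := symmetric e /\ irreflexive e.

Definition connected_graph : Prop := forall x y : T, connect e x y.

Definition edges : {set {set T}} := [set [set x; y] | x in T, y in T & e x y].

Definition independent (A : {set T}) : bool :=
  [forall x in A, forall y in A, ~~ e x y].

Definition nbhd (A : {set T}) : {set T} := [set y | [exists x in A, e x y]].

Definition vertex_cover (C : {set T}) : bool :=
  [forall x, forall y, e x y ==> (x \in C) || (y \in C)].

(* v(G) = min{|A| : A independent, N_G(A) a vertex cover}
   (default #|T| if the family were empty; it is nonempty for graphs with edges) *)
Definition vnumber : nat :=
  \big[minn/#|T|]_(A : {set T} | independent A && vertex_cover (nbhd A)) #|A|.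

Definition matching (M : {set {set T}}) : bool := (M \subset edges) && trivIset M.

Definition maximal_matching (M : {set {set T}}) : bool :=
  matching M && [forall f in edges, (f \notin M) ==> ~~ matching (f |: M)].

Definition matching_number : nat := \max_(M : {set {set T}} | matching M) #|M|.

Definition edge_domination_number : nat :=
  \big[minn/#|T|]_(M : {set {set T}} | maximal_matching M) #|M|.

End Graphs.

(* Main.v *)
Require Import Defs.
From mathcomp Require Import all_boot.
From mathcomp Require Import zify.
Set Implicit Arguments. Unset Strict Implicit. Unset Printing Implicit Defensive.

Lemma bigmin_le (I : eqType) (s : seq I) (P : pred I) (F : I -> nat) d i0 :
  i0 \in s -> P i0 -> \big[minn/d]_(i <- s | P i) F i <= F i0.
Proof.
elim: s => // a s IH; rewrite inE big_cons => /orP[/eqP<- ->|/IH H Hp].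
  exact: geq_minl.
case: ifP => _; last exact: H.
by rewrite geq_min H ?orbT.
Qed.

Section G.
Variable T : finType.
Variable e : rel T.
Hypothesis sym : symmetric e.
Hypothesis irr : irreflexive e.

Lemma nbhdP (A : {set T}) a : reflect (exists2 x, x \in A & e x a) (a \in nbhd e A).
Proof.
rewrite inE; apply: (iffP existsP) => [[x /andP[H1 H2]]|[x H1 H2]]; exists x => //.
by rewrite H1.
Qed.

Definition good (U A : {set T}) := A \subset U /\ independent e A /\
  forall a b, a \in U -> b \in U -> e a b -> (a \in nbhd e A) || (b \in nbhd e A).

Definition NN x := x |: nbhd e [set x].

Lemma step (U A : {set T}) x : x \in U -> good (U :\: NN x) A -> good U (x |: A) /\ #|x |: A| <= #|A|.+1.
Proof.
move=> xU [sA [iA cA]]; split; last by rewrite cardsU1; case: (x \in A).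
have nA: forall q, q \in A -> ~~ e x q.
  move=> q /(subsetP sA); rewrite !inE negb_or => /andP[/andP[_ H] _].
  apply: contra H => exq; apply/existsP; exists x; by rewrite inE eqxx.
have mono: forall a, a \in nbhd e A -> a \in nbhd e (x |: A).
  move=> a /nbhdP[y yA eya]; apply/nbhdP; exists y => //; by rewrite !inE yA orbT.
split; [|split].
- apply/subsetP => q; rewrite !inE => /orP[/eqP->//|/(subsetP sA)]; by rewrite !inE => /andP[].
- apply/forallP => p; apply/implyP => pA; apply/forallP => q; apply/implyP => qA.
  move: pA qA; rewrite !inE => /orP[/eqP->|pA] /orP[/eqP->|qA].
  + by rewrite irr.
  + exact: nA.
  + by rewrite sym; apply: nA.
  + by move/forallP: iA => /(_ p); rewrite pA /= => /forallP /(_ q); rewrite qA.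
- move=> a b aU bU eab.
  have xin: forall c, e x c -> c \in nbhd e (x |: A).
    by move=> c exc; apply/nbhdP; exists x; rewrite ?inE ?eqxx.
  case aN: (a \in NN x).
    move: aN; rewrite /NN in_setU1 => /orP[/eqP Ha|/nbhdP[y]].
      by rewrite (xin b) ?orbT // -Ha.
    by rewrite in_set1 => /eqP -> /xin ->.
  case bN: (b \in NN x).
    move: bN; rewrite /NN in_setU1 => /orP[/eqP Hb|/nbhdP[y]].
      by rewrite xin // -Hb sym.
    by rewrite in_set1 => /eqP -> /xin ->; rewrite orbT.
  have := cA a b; rewrite !in_setD aN bN aU bU => /(_ isT isT eab) /orP[/mono->//|/mono->]; by rewrite orbT.
Qed.

Lemma good0 (U : {set T}) : (forall a b, a \in U -> b \in U -> ~~ e a b) -> good U set0.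
Proof.
move=> H; split; [by rewrite sub0set|split].
- by apply/forallP => p; rewrite inE.
- by move=> a b aU bU eab; have := H a b aU bU; rewrite eab.
Qed.

Lemma card_rm (U : {set T}) a b : a \in U -> b \in U -> e a b ->
  #|U :\: NN a| + 2 <= #|U|.
Proof.
move=> aU bU eab.
have ab: a != b by apply: contraTneq eab => ->; rewrite irr.
have sub: [set a; b] \subset U :&: NN a.
  apply/subsetP => q; rewrite !inE => /orP[]/eqP->; rewrite ?aU ?bU ?eqxx //=.
  rewrite orbC; apply/orP; left; apply/existsP; exists a; by rewrite inE eqxx.
have := subset_leq_card sub; rewrite cards2 ab => H.
have := cardsID (NN a) U; lia.
Qed.

Lemma half n (U : {set T}) : #|U| <= n -> exists A, good U A /\ #|A| <= #|U| %/ 2.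
Proof.
elim: n U => [|n IH] U hU.
  exists set0; split; last by rewrite cards0.
  apply: good0 => a b aU; move: hU; rewrite leqn0 => /eqP/cards0_eq HU.
  by move: aU; rewrite HU inE.
case: (boolP [exists a in U, exists b in U, e a b]).
  case/exists_inP => a aU /exists_inP[b bU eab].
  have hc := card_rm aU bU eab.
  have [A' [gA' cA']] := IH (U :\: NN a) ltac:(lia).
  have [gA cA] := step aU gA'.
  exists (a |: A'); split => //.
  have H2 : #|U :\: NN a| %/ 2 + 1 <= #|U| %/ 2.
    have -> : #|U| = (#|U| - 2) + 1 * 2 by lia.
    rewrite divnDr ?dvdn_mull // mulnK //.
    by rewrite leq_add2r leq_div2r // leq_subRL; lia.
  lia.
move=> /exists_inPn H; exists set0; split; last by rewrite cards0.
apply: good0 => a b aU bU; have := H a aU; move/exists_inPn; exact.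
Qed.

Lemma core (bs : seq {set T}) (U : {set T}) :
  (forall blk, blk \in bs -> forall x y, x \in blk -> y \in blk -> x != y -> e x y) ->
  (forall a b, a \in U -> b \in U -> e a b -> has (fun blk : {set T} => (a \in blk) || (b \in blk)) bs) ->
  exists A, good U A /\ #|A| <= size bs.
Proof.
elim: bs U => [|blk bs IH] U Hcl Hcov.
  exists set0; split; last by rewrite cards0.
  by apply: good0 => a b aU bU; apply/negP => /(Hcov a b aU bU).
have Hcl' : forall b, b \in bs -> forall x y, x \in b -> y \in b -> x != y -> e x y.
  by move=> b bb; apply: Hcl; rewrite inE bb orbT.
case: (boolP [exists x in U, x \in blk]).
  case/exists_inP => x xU xb.
  have [A' [gA' cA']] : exists A, good (U :\: NN x) A /\ #|A| <= size bs.
    apply: IH => // a b; rewrite !in_setD => /andP[aN aU] /andP[bN bU] eab.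
    have := Hcov a b aU bU eab; rewrite /= => /orP[|//].
    have notin : forall c, c \notin NN x -> c \in blk -> False.
      move=> c cN cb; move: cN; rewrite /NN in_setU1 negb_or => /andP[cx].
      rewrite eq_sym in cx.
      have exc := Hcl blk (mem_head _ _) x c xb cb cx.
      by move/negP; apply; apply/nbhdP; exists x; rewrite ?in_set1.
    by case/orP => [/(notin a aN)|/(notin b bN)].
  have [gA cA] := step xU gA'.
  exists (x |: A'); split => //=; lia.
move=> /exists_inPn Hn.
have [A [gA cA]] : exists A, good U A /\ #|A| <= size bs.
  apply: IH => // a b aU bU eab.
  have := Hcov a b aU bU eab; rewrite /= => /orP[|//].
  by rewrite (negbTE (Hn a aU)) (negbTE (Hn b bU)).
exists A; split => //=; lia.
Qed.

Lemma v_le (A : {set T}) : good setT A -> vnumber e <= #|A|.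
Proof.
move=> [_ [iA cA]]; rewrite /vnumber; apply: bigmin_le; first exact: mem_index_enum.
rewrite iA /=; apply/forallP => a; apply/forallP => b; apply/implyP => eab.
exact: cA.
Qed.

Lemma edgeP f : reflect (exists x y, e x y /\ f = [set x; y]) (f \in edges e).
Proof.
apply: (iffP idP).
  by case/imset2P => x y _; rewrite inE => exy ->; exists x, y.
by case=> x [y [exy ->]]; apply/imset2P; exists x y; rewrite ?inE.
Qed.

Lemma maximal_good M : maximal_matching e M -> exists A, good setT A /\ #|A| <= #|M|.
Proof.
case/andP => /andP[sM tM] /forall_inP mx.
rewrite cardE; apply: core.
  move=> blk; rewrite mem_enum => /(subsetP sM) /edgeP[x [y [exy ->]]] p q.
  rewrite !inE => /orP[]/eqP-> /orP[]/eqP->; rewrite ?eqxx //.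
  by rewrite sym.
move=> a b _ _ eab; apply/negPn/negP => /hasPn H.
have notin : forall B, B \in M -> (a \notin B) && (b \notin B).
  by move=> B BM; have := H B; rewrite mem_enum BM negb_or => /(_ isT).
have fE : [set a; b] \in edges e by apply/edgeP; exists a, b.
have fM : [set a; b] \notin M.
  by apply/negP => /notin; rewrite !inE eqxx.
have := mx _ fE; rewrite fM /= => /negP; apply; apply/andP; split.
  by rewrite subUset sub1set fE sM.
have D : {in M, forall B : {set T}, [disjoint [set a; b] & B]}.
  move=> B BM; have /andP[aB bB] := notin B BM.
  rewrite -setI_eq0; apply/eqP/setP => q; rewrite !inE.
  by apply/negP => /andP[/orP[]/eqP-> qB]; [move: aB|move: bB]; rewrite qB.
suff N0 : set0 \notin M by case: (trivIsetU1 D tM N0).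
apply/negP => /(subsetP sM) /edgeP[x [y [_ Hxy]]].
have : x \in [set x; y] by rewrite !inE eqxx.
by rewrite -Hxy inE.
Qed.

Lemma deg2 : (forall x y : T, connect e x y) -> 3 <= #|T| ->
  exists x y z, [/\ y != z, e x y & e x z].
Proof.
move=> con hT.
have [u _] : exists u : T, true.
  have : 0 < #|T| by lia.
  by case/card_gt0P => u _; exists u.
case: (boolP [exists v, e u v]); last first.
  move/existsPn => nu.
  have cl : closed e [set u].
    move=> x y exy; rewrite !inE; apply/eqP/eqP => [Hx|Hy].
      by move: (nu y); rewrite -Hx exy.
    by move: (nu x); rewrite -Hy sym exy.
  have : 0 < #|~: [set u]| by rewrite cardsC1; lia.
  case/card_gt0P => w; rewrite !inE => wu.
  by have := closed_connect cl (con u w); rewrite !inE eqxx (negbTE wu).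
case/existsP => v euv.
case: (boolP [exists w, (w != v) && e u w]).
  by case/existsP => w /andP[wv euw]; exists u, v, w; rewrite eq_sym.
move/existsPn => nu.
case: (boolP [exists w, (w != u) && e v w]).
  by case/existsP => w /andP[wu evw]; exists v, u, w; rewrite eq_sym sym.
move/existsPn => nv.
have Hu : forall w, e u w -> w = v.
  by move=> w euw; apply/eqP; move: (nu w); rewrite euw andbT negbK.
have Hv : forall w, e v w -> w = u.
  by move=> w evw; apply/eqP; move: (nv w); rewrite evw andbT negbK.
have cl : closed e [set u; v].
  move=> x y exy; rewrite !inE; apply/idP/idP => /orP[]/eqP H; subst.
  - by rewrite (Hu _ exy) eqxx orbT.
  - by rewrite (Hv _ exy) eqxx.
  - by rewrite sym in exy; rewrite (Hu _ exy) eqxx orbT.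
  - by rewrite sym in exy; rewrite (Hv _ exy) eqxx.
have : 0 < #|~: [set u; v]|.
  move: hT; rewrite -(cardsC [set u; v]) cards2; case: (u != v) => /=; lia.
case/card_gt0P => w; rewrite !inE negb_or => /andP[wu wv].
by have := closed_connect cl (con u w); rewrite !inE eqxx (negbTE wu) (negbTE wv).
Qed.

End G.

Theorem proposition3p2 (T : finType) (e : rel T) :
  simple_graph e -> connected_graph e -> 3 <= #|T| ->
  vnumber e <= minn (edge_domination_number e) ((#|T| - 1) %/ 2) /\
  vnumber e <= minn (matching_number e) ((#|T| - 1) %/ 2).
Proof.
move=> [sym irr] con hT.
have [x [y [z [yz exy exz]]]] := deg2 sym con hT.
set U := [set: T] :\: NN e x.
have hU : #|U| + 3 <= #|T|.
  have xy : x != y by apply: contraTneq exy => ->; rewrite irr.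
  have xz : x != z by apply: contraTneq exz => ->; rewrite irr.
  have sub : [set x; y; z] \subset [set: T] :&: NN e x.
    apply/subsetP => q; rewrite !inE => /orP[/orP[]|]/eqP->; rewrite ?eqxx //=;
      rewrite orbC; apply/orP; left; apply/existsP; exists x; by rewrite inE eqxx.
  have := subset_leq_card sub.
  rewrite -setUA cardsU1 cards2 yz !inE negb_or xy xz /=.
  move=> H3; rewrite -cardsT -(cardsID (NN e x) [set: T]) -/U; lia.
have [A' [gA' cA']] := half sym irr (leqnn #|U|).
have [gA cA] := step sym irr (in_setT x) gA'.
have vA := v_le gA.
have vb : vnumber e <= (#|T| - 1) %/ 2.
  apply: (leq_trans vA); apply: (leq_trans cA).
  have H : #|U| %/ 2 + 1 <= (#|T| - 1) %/ 2.
    have -> : (#|T| - 1) = (#|T| - 3) + 1 * 2 by lia.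
    rewrite divnDr ?dvdn_mull // mulnK // leq_add2r leq_div2r //; lia.
  lia.
have vT : vnumber e <= #|T|.
  apply: (leq_trans vb); apply: leq_trans (leq_div _ _) _; exact: leq_subr.
have Hmax : forall M, maximal_matching e M -> vnumber e <= #|M|.
  move=> M /(maximal_good sym irr) [B [gB cB]].
  exact: (leq_trans (v_le gB) cB).
split; rewrite leq_min vb andbT.
  rewrite /edge_domination_number; apply: (big_ind (fun m => vnumber e <= m)) => //.
  by move=> a b Ha Hb; rewrite leq_min Ha Hb.
have [M0 HM0 Heq] := @eq_bigmax_cond _ [pred M | matching e M] (fun M => #|M|) ltac:(
  apply/card_gt0P; exists set0;
  by rewrite inE /matching sub0set; apply/trivIsetP => A B; rewrite inE).
have Heq' : matching_number e = #|M0| := Heq.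
rewrite Heq'.
apply: Hmax; apply/andP; split => //.
apply/forall_inP => f fE; apply/implyP => fM; apply/negP => mf.
have : #|f |: M0| <= matching_number e
  := @leq_bigmax_cond _ (fun M => matching e M) (fun M => #|M|) _ mf.
rewrite cardsU1 fM Heq'.
lia.
Qed.
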